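(* Let $\mathbb F_q$ be a finite field and let $B \subseteq \mathbb F_q^m$ be $C$-weakly Sidorenko, with $r := \mathrm{rank}_{\mathrm{aff}}(B) \geq 1$. Then for every $n$, \[\mathrm{ex}_{\mathrm{aff}}(n,B) < q^{\,n - (n-r+1)/(C-r+1)}.\] Moreover, if $A \subseteq \mathbb F_q^n$ with $|A| = D q^{(1 - 1/(C-r+1))n}$ for some $D > 0$, then $A$ contains more than \[\left(1 - \frac{q^{r-1}}{D^{C-r+1}}\right)\frac{\alpha^C N^r}{|\mathrm{Aut}_{\mathrm{aff}}(B)|}\] subsets affinely isomorphic to $B$, where $N = q^n$ and $|A| = \alpha N$.
   Context: An affine relation on $x_1,\ldots,x_k$ is an equation $\sum_i \lambda_i x_i = 0$ with $\lambda_i \in \mathbb F_q$, $\sum_i \lambda_i = 0$; a set is affinely independent if it has no such relation with some $\lambda_i \ne 0$, and $\mathrm{rank}_{\mathrm{aff}}(B)$ is the size of a maximal affinely independent subset of $B$. For $B \subseteq \mathbb F_q^m$, $A \subseteq \mathbb F_q^n$, an affine homomorphism $B \to A$ is a map extending to an affine map $\mathbb F_q^m \to \mathbb F_q^n$; $\mathrm{hom}_{\mathrm{aff}}(B,A)$ is the number of them. An affine isomorphism is a bijective affine homomorphism whose inverse is an affine homomorphism; $\mathrm{Aut}_{\mathrm{aff}}(B)$ is the set of affine isomorphisms $B \to B$. A subset $B' \subseteq A$ is affinely isomorphic to $B$ if there is an affine isomorphism $B \to B'$; $A$ contains an affine copy of $B$ if it has such a subset. $\mathrm{ex}_{\mathrm{aff}}(n,B)$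 is the maximum size of a subset of $\mathbb F_q^n$ containing no affine copy of $B$. $B$ is $C$-weakly Sidorenko if for every $n$ and every $A \subseteq \mathbb F_q^n$ with $|A| = \alpha q^n$, $\mathrm{hom}_{\mathrm{aff}}(B,A) \geq \alpha^C (q^n)^{\mathrm{rank}_{\mathrm{aff}}(B)}$. *)

(* Defs.v *)
From HB Require Import structures.
From mathcomp Require Import all_boot all_order all_algebra.
From mathcomp Require Import all_classical all_reals all_analysis.
Set Implicit Arguments. Unset Strict Implicit. Unset Printing Implicit Defensive.
Import Order.TTheory GRing.Theory Num.Theory.
Local Open Scope ring_scope.

Section AffineDefs.
Variable F : finFieldType.

Definition aff_indep (m : nat) (S : {set 'rV[F]_m}) : bool :=
  [forall lam : {ffun 'rV[F]_m -> F},
     ((\sum_(x in S) lam x == 0) && (\sum_(x in S) lam x *: x == 0))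
       ==> [forall x in S, lam x == 0]].

(* affine rank: size of a maximal (= maximum, matroid) affinely independent subset *)
Definition rank_aff (m : nat) (B : {set 'rV[F]_m}) : nat :=
  \max_(S : {set 'rV[F]_m} | (S \subset B) && aff_indep S) #|S|.

Definition is_aff_on (m n : nat) (B : {set 'rV[F]_m}) (f : 'rV[F]_m -> 'rV[F]_n)
  : bool :=
  [exists M : 'M[F]_(m, n), exists b : 'rV[F]_n,
     [forall x in B, f x == x *m M + b]].

(* maps B -> A are represented as finite functions that vanish outside B *)
Definition supported_on (m n : nat) (B : {set 'rV[F]_m})
  (f : {ffun 'rV[F]_m -> 'rV[F]_n}) : bool :=
  [forall x, (x \notin B) ==> (f x == 0)].

Definition hom_aff (m n : nat) (B : {set 'rV[F]_m}) (A : {set 'rV[F]_n}) : nat :=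
  #|[set f : {ffun 'rV[F]_m -> 'rV[F]_n} |
      [&& supported_on B f, is_aff_on B f & [forall x in B, f x \in A]]]|.

Definition aff_iso (m n : nat) (B : {set 'rV[F]_m}) (B' : {set 'rV[F]_n})
  (f : {ffun 'rV[F]_m -> 'rV[F]_n}) : bool :=
  [&& is_aff_on B f,
      [forall x in B, forall y in B, (f x == f y) ==> (x == y)],
      f @: B == B' &
      [exists g : {ffun 'rV[F]_n -> 'rV[F]_m},
         is_aff_on B' g && [forall x in B, g (f x) == x]]].

Definition aut_aff_card (m : nat) (B : {set 'rV[F]_m}) : nat :=
  #|[set f : {ffun 'rV[F]_m -> 'rV[F]_m} | supported_on B f && aff_iso B B f]|.

Definition aff_isomorphic (m n : nat) (B : {set 'rV[F]_m}) (B' : {set 'rV[F]_n})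
  : bool :=
  [exists f : {ffun 'rV[F]_m -> 'rV[F]_n}, aff_iso B B' f].

Definition aff_copies (m n : nat) (B : {set 'rV[F]_m}) (A : {set 'rV[F]_n})
  : {set {set 'rV[F]_n}} :=
  [set B' : {set 'rV[F]_n} | (B' \subset A) && aff_isomorphic B B'].

Definition contains_aff_copy (m n : nat) (A : {set 'rV[F]_n}) (B : {set 'rV[F]_m})
  : bool := (0 < #|aff_copies B A|)%N.

Definition ex_aff (m : nat) (n : nat) (B : {set 'rV[F]_m}) : nat :=
  \max_(A : {set 'rV[F]_n} | ~~ contains_aff_copy A B) #|A|.

Definition weakly_sidorenko (R : realType) (C : R) (m : nat)
  (B : {set 'rV[F]_m}) : Prop :=
  forall (n : nat) (A : {set 'rV[F]_n}),
    (#|A|%:R / (#|F| ^ n)%:R) `^ C * ((#|F| ^ n)%:R ^+ rank_aff B)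
      <= (hom_aff B A)%:R :> R.

End AffineDefs.

(* Main.v *)
Require Import Defs.
From HB Require Import structures.
From mathcomp Require Import all_boot all_order all_algebra.
From mathcomp Require Import all_classical all_reals all_analysis.
From mathcomp Require Import ring lra.
Import Order.TTheory GRing.Theory Num.Theory.
Local Open Scope ring_scope.

Import fintype finset bigop finfun matrix mxalgebra.
Set Implicit Arguments. Unset Strict Implicit. Unset Printing Implicit Defensive.

Lemma card_union_le (I T : finType) (X : {set T}) (Y : I -> {set T}) :
  (forall x, x \in X -> exists i, x \in Y i) -> (#|X| <= \sum_i #|Y i|)%N.
Proof.
move=> h; rewrite -sum1_card.
apply: (@leq_trans (\sum_(x in X) \sum_i (x \in Y i : nat))).
  apply: leq_sum => x xX; have [i hi] := h x xX.
  by rewrite (bigD1 i) //= hi leq_addr.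
rewrite exchange_big; apply: leq_sum => i _.
rewrite -sum1_card big_mkcond [X in (_ <= X)%N]big_mkcond /=.
by apply: leq_sum => x _; case: (x \in X); case: (x \in Y i).
Qed.

Section Comb.
Variable F : finFieldType.
Variable m : nat.
Variable B : {set 'rV[F]_m}.
Local Notation V := 'rV[F]_m.

Lemma affine_comb n (M : 'M[F]_(m,n)) (b : 'rV[F]_n) (S : {set V}) (lam : V -> F) :
  \sum_(y in S) lam y = 1 ->
  (\sum_(y in S) lam y *: y) *m M + b = \sum_(y in S) lam y *: (y *m M + b).
Proof.
move=> H1.
under [RHS]eq_bigr do rewrite scalerDr.
rewrite big_split /= -scaler_suml H1 scale1r mulmx_suml.
congr (_ + _); apply: eq_bigr => y _; by rewrite scalemxAl.
Qed.

Lemma in_aff_span (S : {set V}) : S \subset B -> aff_indep S -> #|S| = rank_aff B ->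
  forall x, x \in B -> exists lam : {ffun V -> F},
    \sum_(y in S) lam y = 1 /\ \sum_(y in S) lam y *: y = x.
Proof.
move=> SB Sind Scard x xB.
case xS: (x \in S).
  exists [ffun y => (y == x)%:R]; split.
    rewrite (bigD1 x) //= ffunE eqxx big1 ?addr0 // => y /andP [_ /negbTE yx].
    by rewrite ffunE yx.
  rewrite (bigD1 x) //= ffunE eqxx scale1r big1 ?addr0 // => y /andP [_ /negbTE yx].
  by rewrite ffunE yx scale0r.
have notind : ~~ aff_indep (x |: S).
  apply/negP => ind.
  have : (#|x |: S| <= rank_aff B)%N.
    rewrite /rank_aff; apply: leq_bigmax_cond.
    by rewrite ind andbT finset.subUset finset.sub1set xB SB.
  by rewrite cardsU1 xS Scard ltnn.
move: notind; rewrite /aff_indep => /forallPn [lam].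
rewrite negb_imply => /andP [/andP [/eqP s0 /eqP s1] /forallPn [z]].
rewrite negb_imply => /andP [zin nz].
rewrite !big_setU1 ?xS //= in s0 s1.
have lx : lam x != 0.
  apply/negP => /eqP lx0.
  move: s0 s1; rewrite lx0 add0r scale0r add0r => s0 s1.
  move: Sind; rewrite /aff_indep => /forallP /(_ lam).
  rewrite s0 s1 !eqxx /= => /forallP /(_ z).
  move: zin; rewrite in_setU1 => /orP [/eqP zx | zS]; first by move: nz; rewrite zx lx0 eqxx.
  by move/implyP/(_ zS); rewrite (negbTE nz).
have sl : \sum_(y in S) lam y = - lam x.
  by apply/eqP; rewrite -addr_eq0 addrC s0.
have sv : \sum_(y in S) lam y *: y = - (lam x *: x).
  by apply/eqP; rewrite -addr_eq0 addrC s1.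
exists [ffun y => - lam y / lam x]; split.
  under eq_bigr do rewrite ffunE.
  by rewrite -mulr_suml sumrN sl opprK divff.
rewrite (eq_bigr (fun y => (- lam x)^-1 *: (lam y *: y))); last first.
  by move=> y _; rewrite ffunE scalerA invrN mulrC mulrN mulNr.
have nlx : - lam x != 0 by rewrite oppr_eq0.
by rewrite -scaler_sumr sv -scaleNr scalerA mulVf // scale1r.
Qed.


Lemma aff_onP p n (D : {set 'rV[F]_p}) (f : 'rV[F]_p -> 'rV[F]_n) :
  is_aff_on D f -> exists M : 'M[F]_(p, n), exists b : 'rV[F]_n,
    forall y, y \in D -> f y = y *m M + b.
Proof.
case/existsP => M /existsP [b /forallP hb]; exists M, b => y yD.
by apply/eqP; exact: (implyP (hb y) yD).
Qed.

Lemma aff_onI p n (D : {set 'rV[F]_p}) (f : 'rV[F]_p -> 'rV[F]_n) (M : 'M[F]_(p, n)) (b : 'rV[F]_n) :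
  (forall y, y \in D -> f y = y *m M + b) -> is_aff_on D f.
Proof.
move=> h; apply/existsP; exists M; apply/existsP; exists b; apply/forallP => y.
by apply/implyP => yD; rewrite h.
Qed.

Lemma aff_on_eval n (f : V -> 'rV[F]_n) (S : {set V}) (lam : V -> F) x :
  is_aff_on B f -> S \subset B -> \sum_(y in S) lam y = 1 ->
  \sum_(y in S) lam y *: y = x -> x \in B -> f x = \sum_(y in S) lam y *: f y.
Proof.
move=> /aff_onP [M [b hb]] SB s1 sx xB.
rewrite hb // -sx affine_comb //; apply: eq_bigr => y yS.
by rewrite hb //; apply: (fintype.subsetP SB).
Qed.

Lemma supp0 n (f : {ffun V -> 'rV[F]_n}) x : supported_on B f -> x \notin B -> f x = 0.
Proof. by move=> /forallP /(_ x) /implyP h /h /eqP. Qed.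

Lemma hom_determined n (S : {set V}) (f g : {ffun V -> 'rV[F]_n}) :
  S \subset B -> aff_indep S -> #|S| = rank_aff B ->
  supported_on B f -> supported_on B g -> is_aff_on B f -> is_aff_on B g ->
  {in S, f =1 g} -> f = g.
Proof.
move=> SB Sind Scard sf sg af ag fg; apply/ffunP => x.
case xB: (x \in B); last by rewrite !supp0 ?xB.
have [lam [l1 lx]] := in_aff_span SB Sind Scard xB.
rewrite (aff_on_eval af SB l1 lx xB) (aff_on_eval ag SB l1 lx xB).
by apply: eq_bigr => y yS; rewrite fg.
Qed.

Lemma nonzero_row (K n : nat) (A : 'M[F]_(K, n)) : A != 0 -> exists l, row l A != 0.
Proof.
move=> nz; case: (pickP (fun l => row l A != 0)) => [l hl | h]; first by exists l.
move: nz; suff -> : A = 0 by rewrite eqxx.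
by apply/row_matrixP => l; rewrite row0; move: (h l) => /negbFE /eqP.
Qed.

Lemma nonzero_entry (n : nat) (x : 'rV[F]_n) : x != 0 -> exists j, x 0 j != 0.
Proof.
move=> nz; case: (pickP (fun j => x 0 j != 0)) => [j hj | h]; first by exists j.
move: nz; suff -> : x = 0 by rewrite eqxx.
by apply/rowP => j; rewrite mxE; move: (h j) => /negbFE /eqP.
Qed.

Lemma not_free_dep (K n : nat) (W : 'M[F]_(K, n)) : ~~ row_free W ->
  exists i : 'I_K, exists y : {ffun 'I_i -> F},
    row i W = \sum_(j < i) y j *: row (widen_ord (ltnW (ltn_ord i)) j) W.
Proof.
rewrite -kermx_eq0 => /nonzero_row [l hl].
set x := row l (kermx W) in hl.
have x0 : x *m W = 0 by rewrite /x -row_mul mulmx_ker row0.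
have [j0 hj0] := nonzero_entry hl.
case: (arg_maxnP (fun j => nat_of_ord j) (P := fun j => x 0 j != 0) hj0) => i xi imax.
exists i.
set w := widen_ord (ltnW (ltn_ord i)).
exists [ffun j : 'I_i => - x 0 (w j) / x 0 i].
have e1 : \sum_(j < K) x 0 j *: row j W =
    x 0 i *: row i W + \sum_(j < K | true && (j < i)%N) x 0 j *: row j W.
  rewrite (bigD1 i) //=; congr (_ + _).
  rewrite big_mkcond [RHS]big_mkcond; apply: eq_bigr => j _ /=.
  case: (ltngtP j i) => [lt|gt|eq].
  - have -> : (j != i) = true by apply/eqP => ji; move: lt; rewrite ji ltnn.
    by [].
  - have -> : x 0 j = 0.
      apply/eqP; apply/negPn/negP => nz; have /= := imax j nz.
      by rewrite leqNgt gt.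
    by rewrite scale0r; case: (j != i).
  - have -> : j = i by apply: val_inj.
    by rewrite eqxx.
rewrite (big_ord_narrow_cond (ltnW (ltn_ord i))) -/w in e1.
rewrite mulmx_sum_row e1 in x0.
have ex : \sum_(j < i) x 0 (w j) *: row (w j) W = - (x 0 i *: row i W).
  by apply/eqP; rewrite -addr_eq0 addrC x0.
rewrite (eq_bigr (fun j => - (x 0 i)^-1 *: (x 0 (w j) *: row (w j) W))); last first.
  by move=> j _; rewrite ffunE scalerA mulNr [in RHS]mulNr mulrC.
by rewrite -scaler_sumr ex scalerN scaleNr opprK scalerA mulVf // scale1r.
Qed.

Section Basis.
Variables (S : {set V}) (b0 : V).
Hypotheses (SB : S \subset B) (Sind : aff_indep S) (Scard : #|S| = rank_aff B)
  (b0S : b0 \in S).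
Local Notation k := #|S :\ b0|.

Definition sv (j : 'I_k) : V := enum_val j.

Lemma sv_in j : sv j \in S :\ b0.
Proof. exact: enum_valP. Qed.

Lemma sv_inj : injective sv.
Proof. exact: enum_val_inj. Qed.

Lemma S_cases y : y \in S -> y = b0 \/ exists j, y = sv j.
Proof.
move=> yS; case: (eqVneq y b0) => [->|ne]; [by left | right].
have yin : y \in S :\ b0 by rewrite in_setD1 ne.
by exists (enum_rank_in yin y); rewrite /sv enum_rankK_in.
Qed.

Lemma agree_S n (f g : {ffun V -> 'rV[F]_n}) :
  supported_on B f -> supported_on B g -> is_aff_on B f -> is_aff_on B g ->
  f b0 = g b0 -> (forall j, f (sv j) = g (sv j)) -> f = g.
Proof.
move=> sf sg af ag e0 ej; apply: (hom_determined SB Sind Scard sf sg af ag) => y yS.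
by case: (S_cases yS) => [-> | [j ->]].
Qed.

Definition Wm n (f : V -> 'rV[F]_n) : 'M[F]_(k, n) := \matrix_(j < k) (f (sv j) - f b0).
Definition Um : 'M[F]_(k, m) := \matrix_(j < k) (sv j - b0).

Lemma iso_of_free n (f : {ffun V -> 'rV[F]_n}) :
  is_aff_on B f -> row_free (Wm f) -> aff_iso B (f @: B) f.
Proof.
move=> af /row_freeP [X hX].
have [M [b hb]] := aff_onP af.
pose G := X *m Um.
pose g := [ffun y : 'rV[F]_n => y *m G + (b0 - f b0 *m G)].
have gf : forall x, x \in B -> g (f x) = x.
  move=> x xB.
  have [lam [l1 lx]] := in_aff_span SB Sind Scard xB.
  pose h := fun y : V => y *m (M *m G) + ((b - f b0) *m G + b0).
  have hE : forall y, y \in B -> g (f y) = h y.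
    move=> y yB; rewrite ffunE (hb y yB) /h mulmxA mulmxDl mulmxBl -addrA.
    by congr (_ + _); rewrite [LHS]addrCA [LHS]addrC.
  have hS : forall y, y \in S -> h y = y.
    move=> y yS; have yB : y \in B := fintype.subsetP SB y yS.
    rewrite -hE //; case: (S_cases yS) => [-> | [j ->]].
      by rewrite ffunE addrCA subrr addr0.
    rewrite ffunE addrCA addrC -mulmxBl.
    have -> : f (sv j) - f b0 = row j (Wm f) by rewrite rowK.
    by rewrite /G mulmxA -row_mul hX -row_mul mul1mx rowK subrK.
  rewrite hE // -{2}lx -{1}lx /h affine_comb //.
  by apply: eq_bigr => y yS; have := hS y yS; rewrite /h => ->.
apply/and4P; split => //.
- apply/forallP => x; apply/implyP => xB; apply/forallP => y; apply/implyP => yB.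
  by apply/implyP => /eqP e; rewrite -(gf x xB) -(gf y yB) e.
- apply/existsP; exists g; apply/andP; split.
    by apply: (aff_onI (M := G) (b := b0 - f b0 *m G)) => y _; rewrite ffunE.
  by apply/forallP => x; apply/implyP => xB; rewrite gf.
Qed.

Definition Hset n (A : {set 'rV[F]_n}) : {set {ffun V -> 'rV[F]_n}} :=
  [set f : {ffun V -> 'rV[F]_n} |
      [&& supported_on B f, is_aff_on B f & [forall x in B, f x \in A]]].

Definition wi (i : 'I_k) : 'I_i -> 'I_k := widen_ord (ltnW (ltn_ord i)).

Definition degi n (i : 'I_k) (f : {ffun V -> 'rV[F]_n}) : bool :=
  [exists y : {ffun 'I_i -> F},
     f (sv i) - f b0 == \sum_(j < i) y j *: (f (sv (wi j)) - f b0)].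

Lemma b0B : b0 \in B. Proof. exact: fintype.subsetP SB b0 b0S. Qed.
Lemma svB j : sv j \in B.
Proof. by apply: (fintype.subsetP SB); move: (sv_in j); rewrite in_setD1 => /andP []. Qed.

Lemma HsetP n (A : {set 'rV[F]_n}) f : f \in Hset A ->
  [/\ supported_on B f, is_aff_on B f & forall x, x \in B -> f x \in A].
Proof.
rewrite finset.inE => /and3P [h1 h2 /forallP h3]; split => // x xB.
exact: (implyP (h3 x) xB).
Qed.

Lemma deg_bound n (A : {set 'rV[F]_n}) (i : 'I_k) :
  (#|[set f in Hset A | degi i f]| <= #|A| ^ k * #|F| ^ i)%N.
Proof.
pose P (f : {ffun V -> 'rV[F]_n}) (y : {ffun 'I_i -> F}) :=
  f (sv i) - f b0 == \sum_(j < i) y j *: (f (sv (wi j)) - f b0).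
pose Phi (f : {ffun V -> 'rV[F]_n}) :=
  ([ffun j => if j == i then f b0 else f (sv j)], odflt 0 [pick y | P f y]).
pose T := finset.setX [set g : {ffun 'I_k -> 'rV[F]_n} | g \in ffun_on (mem A)]
               [set: {ffun 'I_i -> F}].
have cT : #|T| = (#|A| ^ k * #|F| ^ i)%N.
  by rewrite cardsX cardsE card_ffun_on cardsT card_ffun !card_ord.
rewrite -cT.
have inj : {in [set f in Hset A | degi i f] &, injective Phi}.
  move=> f g /setIdP [hf df] /setIdP [hg dg] e.
  have [sf af _] := HsetP hf; have [sg ag _] := HsetP hg.
  have e1 := congr1 fst e; have e2 := congr1 snd e; rewrite /= in e1 e2.
  have ej : forall j, (if j == i then f b0 else f (sv j)) = (if j == i then g b0 else g (sv j)).
    by move=> j; move/ffunP: e1 => /(_ j); rewrite !ffunE.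
  have e0 : f b0 = g b0 by have := ej i; rewrite eqxx.
  have es : forall j, j != i -> f (sv j) = g (sv j).
    by move=> j /negbTE ji; have := ej j; rewrite ji.
  case: pickP e2 => [yf Pf|nf]; last by move: df => /existsP [y Py]; move: (nf y); rewrite /P Py.
  case: pickP => [yg Pg|ng] /= eyy; last by move: dg => /existsP [y Py]; move: (ng y); rewrite /P Py.
  apply: (agree_S sf sg af ag e0) => j.
  case: (eqVneq j i) => [->|ji]; last by apply: es.
  move: Pf Pg; rewrite /P eyy => /eqP Pf /eqP Pg.
  have -> : f (sv i) = \sum_(j0 < i) yg j0 *: (f (sv (wi j0)) - f b0) + f b0 by rewrite -Pf subrK.
  have -> : g (sv i) = \sum_(j0 < i) yg j0 *: (g (sv (wi j0)) - g b0) + g b0 by rewrite -Pg subrK.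
  rewrite e0; congr (_ + _); apply: eq_bigr => j0 _; rewrite es //.
  by apply/eqP => /(congr1 val) /= ee; move: (ltn_ord j0); rewrite ee ltnn.
rewrite -(card_in_imset inj); apply: subset_leq_card; apply/fintype.subsetP => p.
case/imsetP => f /setIdP [hf _] ->.
have [_ _ fA] := HsetP hf.
rewrite finset.inE /= finset.inE finset.in_setT andbT; apply/ffun_onP => j; rewrite ffunE.
by case: (j == i); apply: fA; [exact: b0B | exact: svB].
Qed.

Lemma deg_total n (A : {set 'rV[F]_n}) :
  (#|[set f in Hset A | ~~ row_free (Wm f)]| <= \sum_(i < k) #|A| ^ k * #|F| ^ i)%N.
Proof.
apply: (@leq_trans (\sum_(i < k) #|[set f in Hset A | degi i f]|)); last first.
  by apply: leq_sum => i _; exact: deg_bound.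
apply: card_union_le => f /setIdP [hf nf].
have [i [y hy]] := not_free_dep nf.
exists i; apply/setIdP; split => //; apply/existsP; exists y.
move: hy; rewrite rowK => ->; apply/eqP; apply: eq_bigr => j _.
by rewrite rowK.
Qed.

Lemma hom_split n (A : {set 'rV[F]_n}) :
  (#|Hset A| <= #|[set f in Hset A | aff_iso B (f @: B) f]|
               + \sum_(i < k) #|A| ^ k * #|F| ^ i)%N.
Proof.
apply: leq_trans (leq_add (leqnn _) (deg_total A)).
apply: leq_trans (leq_card_setU _ _).
apply: subset_leq_card; apply/fintype.subsetP => f hf; rewrite finset.in_setU.
case rf: (row_free (Wm f)).
  have [_ af _] := HsetP hf.
  by apply/orP; left; apply/setIdP; split => //; apply: iso_of_free.
by apply/orP; right; apply/setIdP; rewrite rf.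
Qed.

End Basis.

Lemma isoP n (B' : {set 'rV[F]_n}) (f : {ffun V -> 'rV[F]_n}) :
  aff_iso B B' f -> [/\ is_aff_on B f, {in B &, injective f}, f @: B = B' &
    exists g : {ffun 'rV[F]_n -> V}, is_aff_on B' g /\ {in B, cancel f g}].
Proof.
case/and4P => af /forallP inj /eqP im /existsP [g /andP [ag /forallP gf]].
split => //.
- move=> x y xB yB e; move: (inj x) => /implyP /(_ xB) /forallP /(_ y) /implyP /(_ yB).
  by rewrite e eqxx => /implyP /(_ isT) /eqP.
- by exists g; split => // x xB; apply/eqP; exact: (implyP (gf x) xB).
Qed.

Lemma isoI n (B' : {set 'rV[F]_n}) (f : {ffun V -> 'rV[F]_n}) (g : {ffun 'rV[F]_n -> V}) :
  is_aff_on B f -> f @: B = B' -> is_aff_on B' g -> {in B, cancel f g} -> aff_iso B B' f.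
Proof.
move=> af im ag gf; apply/and4P; split => //.
- apply/forallP => x; apply/implyP => xB; apply/forallP => y; apply/implyP => yB.
  by apply/implyP => /eqP e; rewrite -(gf x xB) -(gf y yB) e.
- by rewrite im.
- by apply/existsP; exists g; rewrite ag /=; apply/forallP => x; apply/implyP => xB; rewrite gf.
Qed.

Definition Iset n (A : {set 'rV[F]_n}) :=
  [set f in Hset A | aff_iso B (f @: B) f].

Definition Autset := [set f : {ffun V -> V} | supported_on B f && aff_iso B B f].

Lemma per_copy n (A : {set 'rV[F]_n}) (B' : {set 'rV[F]_n}) :
  (#|[set f | (f \in Iset A) && (f @: B == B')]| <= #|Autset|)%N.
Proof.
set J := [set f | _].
case: (pickP (mem J)) => [f0 f0J | J0]; last first.
  by rewrite (eq_card0 J0).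
move: f0J => /setIdP [/setIdP [_ /isoP [af0 _ im0 [g0 [ag0 g0f0]]]] /eqP e0].
rewrite e0 in ag0.
have fg0 : forall y, y \in B' -> g0 y \in B /\ f0 (g0 y) = y.
  by move=> y; rewrite -e0 => /imsetP [x xB ->]; rewrite g0f0.
pose sig (h : {ffun V -> 'rV[F]_n}) := [ffun x => if x \in B then g0 (h x) else 0 : V].
have hJ : forall h, h \in J -> [/\ supported_on B h, {in B, forall x, h x \in B'}, is_aff_on B h,
    {in B &, injective h} & exists gh : {ffun 'rV[F]_n -> V}, is_aff_on B' gh /\ {in B, cancel h gh}].
  move=> h /setIdP [/setIdP [hH /isoP [ah ih imh [gh [agh ghh]]]] /eqP eh].
  have [sh _ _] := HsetP hH.
  split => //; last by exists gh; rewrite -eh -imh.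
  by move=> x xB; rewrite -eh; apply: imset_f.
have inj : {in J &, injective sig}.
  move=> h1 h2 /hJ [s1 i1 _ _ _] /hJ [s2 i2 _ _ _] e; apply/ffunP => x.
  case xB: (x \in B); last by rewrite !supp0 ?xB.
  move/ffunP: e => /(_ x); rewrite !ffunE xB => e.
  have [_ <-] := fg0 _ (i1 x xB); have [_ <-] := fg0 _ (i2 x xB).
  by rewrite e.
rewrite -(card_in_imset inj); apply: subset_leq_card; apply/fintype.subsetP => s'.
case/imsetP => h /hJ [sh ih ah injh [gh [agh ghh]]] ->.
rewrite finset.inE; apply/andP; split.
  apply/forallP => x; apply/implyP => xB; rewrite ffunE.
  by rewrite (negbTE xB).
have sB : forall x, x \in B -> sig h x = g0 (h x) by move=> x xB; rewrite ffunE xB.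
have sinB : forall x, x \in B -> sig h x \in B by move=> x xB; rewrite sB //; case: (fg0 _ (ih x xB)).
have sinj : {in B &, injective (sig h)}.
  move=> x y xB yB; rewrite !sB // => e.
  apply: injh => //.
  have [_ <-] := fg0 _ (ih x xB); have [_ <-] := fg0 _ (ih y yB).
  by rewrite e.
apply: (@isoI _ _ _ [ffun y => gh (f0 y)]).
- have [Mh [bh hh]] := aff_onP ah; have [Mg [bg hg]] := aff_onP ag0.
  apply: (aff_onI (M := Mh *m Mg) (b := bh *m Mg + bg)) => x xB.
  by rewrite sB // hg ?ih // hh // mulmxDl mulmxA addrA.
- apply/eqP; rewrite eqEcard; apply/andP; split.
    by apply/fintype.subsetP => y /imsetP [x xB ->]; apply: sinB.
  by rewrite (card_in_imset sinj).
- have [Mf [bf hf]] := aff_onP af0; have [Mg [bg hg]] := aff_onP agh.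
  apply: (aff_onI (M := Mf *m Mg) (b := bf *m Mg + bg)) => x xB.
  rewrite ffunE hf // hg; first by rewrite mulmxDl mulmxA addrA.
  by rewrite -hf // -e0; apply: imset_f.
- move=> x xB; rewrite ffunE sB //.
  by have [_ ->] := fg0 _ (ih x xB); rewrite ghh.
Qed.

Lemma iso_copies n (A : {set 'rV[F]_n}) :
  (#|Iset A| <= #|aff_copies B A| * #|Autset|)%N.
Proof.
rewrite -sum1_card.
rewrite (partition_big (fun f : {ffun V -> 'rV[F]_n} => f @: B) (mem (aff_copies B A))) /=; last first.
  move=> f /setIdP [hf isf]; have [_ _ fA] := HsetP hf.
  rewrite finset.inE; apply/andP; split.
    by apply/fintype.subsetP => y /imsetP [x xB ->]; apply: fA.
  by apply/existsP; exists f.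
rewrite -sum_nat_const; apply: leq_sum => B' _.
rewrite sum1dep_card.
exact: per_copy.
Qed.

Lemma exists_basis : exists S : {set V}, [/\ S \subset B, aff_indep S & #|S| = rank_aff B].
Proof.
have h0 : (finset.set0 \subset B) && aff_indep (finset.set0 : {set V}).
  rewrite finset.sub0set /=; apply/forallP => lam; apply/implyP => _; apply/forallP => x.
  by rewrite finset.in_set0.
case: (@arg_maxnP _ finset.set0 (fun S : {set V} => (S \subset B) && aff_indep S) (fun S : {set V} => #|S|) h0) => S /andP [h1 h2] hmax.
exists S; split => //; rewrite /rank_aff; apply/eqP; rewrite eqn_leq.
apply/andP; split; first by apply: leq_bigmax_cond; rewrite h1 h2.
by apply/bigmax_leqP => T hT; exact: hmax.
Qed.

Lemma main_count n (A : {set 'rV[F]_n}) : (1 <= rank_aff B)%N ->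
  (hom_aff B A <= #|aff_copies B A| * aut_aff_card B
     + \sum_(i < (rank_aff B).-1) #|A| ^ (rank_aff B).-1 * #|F| ^ i)%N.
Proof.
move=> r1; have [S [SB Sind Scard]] := exists_basis.
have : (0 < #|S|)%N by rewrite Scard.
case/card_gt0P => b0 b0S.
have ek : (rank_aff B).-1 = #|S :\ b0| by rewrite -Scard (cardsD1 b0 S) b0S.
rewrite ek.
apply: leq_trans (hom_split SB Sind Scard b0S A) _.
by rewrite leq_add2r; exact: iso_copies.
Qed.

Lemma aut_pos : (0 < aut_aff_card B)%N.
Proof.
apply/card_gt0P; exists [ffun x => if x \in B then x else 0]; rewrite finset.inE; apply/andP; split.
  by apply/forallP => x; apply/implyP => xB; rewrite ffunE (negbTE xB).
apply: (@isoI _ _ _ [ffun y => y]).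
- by apply: (aff_onI (M := 1%:M) (b := 0)) => x xB; rewrite ffunE xB mulmx1 addr0.
- by rewrite (@eq_in_imset _ _ _ id) ?imset_id // => x xB; rewrite ffunE xB.
- by apply: (aff_onI (M := 1%:M) (b := 0)) => x xB; rewrite ffunE mulmx1 addr0.
- by move=> x xB; rewrite !ffunE xB.
Qed.

Lemma hom_single n (a : 'rV[F]_n) : (hom_aff B [set a] <= 1)%N.
Proof.
apply: (@leq_trans #|[set ([ffun x => if x \in B then a else 0] : {ffun V -> 'rV[F]_n})]|);
  last by rewrite cards1.
apply: subset_leq_card; apply/fintype.subsetP => f hf; rewrite finset.in_set1.
have [sf _ fA] := HsetP hf.
apply/eqP/ffunP => x; rewrite ffunE.
case xB: (x \in B); last by rewrite supp0 ?xB.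
by apply/eqP; rewrite -finset.in_set1 fA.
Qed.

End Comb.

Lemma geom_lt (q k : nat) : (1 < q)%N -> (\sum_(i < k) q ^ i < q ^ k)%N.
Proof.
move=> q1; elim: k => [|k IH]; first by rewrite big_ord0.
rewrite big_ord_recr /= expnS.
apply: (@leq_trans (q ^ k + q ^ k)); first by rewrite -addSn leq_add2r.
by rewrite addnn -mul2n leq_mul2r q1 orbT.
Qed.

Unset Implicit Arguments. Set Strict Implicit. Set Printing Implicit Defensive.

Lemma powR_gt1 (R : realType) (q x : R) : 1 < q -> 0 < x -> 1 < q `^ x.
Proof.
move=> q1 x0; rewrite /powR gt_eqF ?(lt_trans ltr01 q1) //.
by rewrite expR_gt1 mulr_gt0 // ln_gt0.
Qed.

Lemma fin_ineq (R : realType) (Z CA H ak Q DK : R) :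
  H <= CA + Z * ak -> ak * DK <= H -> Z * ak < Q * ak -> ak * DK - Q * ak < CA.
Proof. move=> *; lra. Qed.

Lemma exp_eq (R : realType) (x y z : R) :
  (y - x) * z^-1 + x <= x - (x - (y + 1) + 1) / z.
Proof.
have -> : x - (y + 1) + 1 = x - y by rewrite opprD addrA subrK.
by rewrite -mulNr opprB addrC.
Qed.

Theorem lemma3p2 (R : realType) (F : finFieldType) (m : nat)
  (B : {set 'rV[F]_m}) (C : R) :
  weakly_sidorenko C B ->
  (1 <= rank_aff B)%N ->
  let q : R := (#|F|)%:R in
  let r : nat := rank_aff B in
  (forall n : nat,
     (ex_aff n B)%:R < q `^ (n%:R - (n%:R - r%:R + 1) / (C - r%:R + 1)))
  /\
  (forall (n : nat) (A : {set 'rV[F]_n}) (D : R),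
     0 < D ->
     (#|A|)%:R = D * q `^ ((1 - 1 / (C - r%:R + 1)) * n%:R) ->
     let N : R := q ^+ n in
     let alpha : R := (#|A|)%:R / N in
     (1 - q ^+ r.-1 / D `^ (C - r%:R + 1)) * (alpha `^ C * N ^+ r)
       / (aut_aff_card B)%:R
     < (#|aff_copies B A|)%:R).
Proof.
move=> hS r1 q r.
have q1 : 1 < q by rewrite /q ltr1n card_finNzRing_gt1.
have q0 : 0 < q by apply: lt_trans q1.
have qn0 : q != 0 by rewrite gt_eqF.
have q0' : 0 <= q by apply: ltW.
set k := r.-1.
have er : r = k.+1 by rewrite /k prednK.
have rk : r%:R = k%:R + 1 :> R by rewrite er natr1.
have Cr : r%:R <= C.
  have h := hS 1%N [set 0]; rewrite cards1 expn1 -/q in h.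
  have h1 : (hom_aff B [set (0 : 'rV[F]_1)])%:R <= 1 :> R by rewrite lern1 hom_single.
  rewrite leNgt; apply/negP => Clt.
  have : 1 < (1 / q) `^ C * q ^+ r.
    rewrite div1r -powR_inv1 // -powRrM -powR_mulrn // -powRD; last by rewrite qn0 implybT.
    by apply: powR_gt1 => //; rewrite mulN1r addrC subr_gt0.
  by move: (le_trans h h1); rewrite leNgt => /negbTE ->.
set ka := C - r%:R + 1.
have ka1 : 1 <= ka by rewrite /ka lerDr subr_ge0.
have ka0 : 0 < ka by apply: lt_le_trans ka1.
have C0 : C != 0.
  have r1' : 1 <= r%:R :> R by rewrite ler1n.
  by rewrite gt_eqF // (lt_le_trans ltr01 (le_trans r1' Cr)).
have Ck : C = k%:R + ka.
  by rewrite /ka rk; move: (k%:R : R) => x; lra.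
have key : forall a N : R, 0 <= a -> 0 < N ->
    (a / N) `^ C * N ^+ r = a ^+ k * ((a / N) `^ ka * N).
  move=> a N a0 N0.
  have aN0 : 0 <= a / N by rewrite divr_ge0 // ltW.
  rewrite {1}Ck powRD; last by rewrite -Ck (negbTE C0).
  rewrite powR_mulrn // er exprS.
  have -> : a ^+ k = (a / N) ^+ k * N ^+ k by rewrite -exprMn divfK // gt_eqF.
  by rewrite -!mulrA; congr (_ * _); rewrite mulrA mulrC.
have cnt : forall n (A : {set 'rV[F]_n}),
    (hom_aff B A)%:R <= (#|aff_copies B A| * aut_aff_card B)%:R
       + (\sum_(i < k) #|F| ^ i)%:R * (#|A|%:R) ^+ k :> R.
  move=> n A; have := main_count A r1; rewrite -(ler_nat R) natrD natr_sum -/r -/k => h.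
  apply: (le_trans h); rewrite lerD2l natr_sum mulr_suml le_eqVlt; apply/orP; left.
  by apply/eqP; apply: eq_bigr => i _; rewrite GRing.natrM !GRing.natrX mulrC.
have Zlt : (\sum_(i < k) #|F| ^ i)%:R < q ^+ k :> R.
  by rewrite /q -natrX ltr_nat geom_lt // card_finNzRing_gt1.
have Z0 : 0 <= (\sum_(i < k) #|F| ^ i)%:R :> R by [].
have aut0 : 0 < (aut_aff_card B)%:R :> R by rewrite ltr0n aut_pos.
have hom_lb : forall n (A : {set 'rV[F]_n}),
    (#|A|%:R) ^+ k * ((#|A|%:R / q ^+ n) `^ ka * q ^+ n) <= (hom_aff B A)%:R :> R.
  move=> n A; rewrite -key //; last by rewrite exprn_gt0.
  by have := hS n A; rewrite natrX.
split.
- move=> n.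
  set X := q `^ (n%:R - (n%:R - r%:R + 1) / ka).
  have X0 : 0 < X by apply: powR_gt0.
  rewrite /ex_aff.
  apply: (big_ind (fun v : nat => v%:R < X)) => //.
    move=> x y hx hy; case: (leqP x y) => h.
      by [].
    by [].
  move=> A hA.
  set a := #|A|%:R.
  case a0: (#|A| == 0)%N; first by rewrite /a (eqP a0).
  have apos : 0 < a by rewrite /a ltr0n lt0n a0.
  have c0 : #|aff_copies B A| = 0%N.
    by move: hA; rewrite /contains_aff_copy lt0n negbK => /eqP.
  have hc := cnt n A; rewrite c0 mul0n add0r -/a in hc.
  have hl := hom_lb n A; rewrite -/a in hl.
  have ak0 : 0 < a ^+ k by apply: exprn_gt0.
  have N0 : 0 < q ^+ n by rewrite exprn_gt0.
  have h3 := Zlt; rewrite -(ltr_pM2r ak0) in h3.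
  have hY : (a / q ^+ n) `^ ka * q ^+ n < q ^+ k.
    have := le_lt_trans (le_trans hl hc) h3.
    by rewrite (mulrC (a ^+ k)) (ltr_pM2r ak0).
  have ekn : q ^+ k / q ^+ n = q `^ (k%:R - n%:R).
    by rewrite powRB ?qn0 ?implybT // !powR_mulrn.
  rewrite -(ltr_pdivlMr _ _ N0) ekn in hY.
  have aN0 : 0 <= a / q ^+ n by rewrite divr_ge0 // ltW.
  have hb : a / q ^+ n < q `^ ((k%:R - n%:R) * ka^-1).
    rewrite powRrM.
    have -> : a / q ^+ n = ((a / q ^+ n) `^ ka) `^ ka^-1.
      by rewrite -powRrM mulfV ?gt_eqF // powRr1.
    have kai : 0 < ka^-1 by rewrite invr_gt0.
    by apply: (gt0_ltr_powR kai) => //; rewrite nnegrE powR_ge0.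
  have -> : a = a / q ^+ n * q ^+ n by rewrite divfK // gt_eqF.
  rewrite -(ltr_pM2r N0) in hb.
  apply: (lt_le_trans hb).
  rewrite -(powR_mulrn n q0') -powRD; last by rewrite qn0 implybT.
  by rewrite /X rk; apply: ler_powR; [exact: ltW q1 | exact: exp_eq].
- move=> n A D D0 hA; cbv zeta.
  set a := #|A|%:R.
  have Nq : q ^+ n = q `^ n%:R by rewrite powR_mulrn.
  have N0 : 0 < q ^+ n by rewrite exprn_gt0.
  have kan0 : ka != 0 by rewrite gt_eqF.
  have a0 : 0 < a by rewrite /a hA mulr_gt0 // powR_gt0.
  have Dk : (a / q ^+ n) `^ ka * q ^+ n = D `^ ka.
    have e1 : a / q ^+ n = D * q `^ (- (n%:R / ka)).
      rewrite /a hA Nq.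
      have -> : (1 - 1 / ka) * n%:R = n%:R - n%:R / ka by rewrite mulrBl !mul1r [ka^-1 * _]mulrC.
      rewrite powRB; last by rewrite qn0 implybT.
      rewrite powRN -mulrA; congr (_ * _).
      by rewrite mulrAC divff ?mul1r // gt_eqF // powR_gt0.
    rewrite e1 powRM; [|exact: ltW D0|exact: powR_ge0].
    rewrite -powRrM mulNr divfK; last exact: kan0.
    rewrite powRN -Nq -mulrA mulVf ?mulr1 //.
    by rewrite gt_eqF.
  rewrite (key a (q ^+ n) (ltW a0) N0) Dk (ltr_pdivrMr _ _ aut0) -GRing.natrM.
  have hc := cnt n A; have hl := hom_lb n A; rewrite -/a Dk in hl.
  have Dk0 : 0 < D `^ ka by apply: powR_gt0.
  have ak0 : 0 < a ^+ k by apply: exprn_gt0.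
  have h3 := Zlt; rewrite -(ltr_pM2r ak0) in h3.
  rewrite -/a in hc.
  move: hc hl h3 Dk0 ak0 Z0.
  set Z := (\sum_(i < k) _)%:R; set CA := (_ * _)%:R; set H := (hom_aff B A)%:R.
  set ak := a ^+ k; set Q := q ^+ k; set DK := D `^ ka.
  clearbody Z CA H ak Q DK => hc hl h3 Dk0 ak0 Z0.
  have -> : (1 - Q / DK) * (ak * DK) = ak * DK - Q * ak.
    rewrite mulrBl mul1r; congr (_ - _).
    by rewrite [ak * DK]mulrC mulrA divfK // gt_eqF.
  exact: fin_ineq hc hl h3.
Qed.
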